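(* The all-one vector $\mathbf 1=(1)_{t\in\mathbb F_{3^{2m}}}$ belongs to $\mathcal C_3(\mathbb D_d)$.
   Context: Let $m\ge 2$ be an integer. For $s\in\{m,2m\}$ let $\mathrm{Tr}_s:\mathbb F_{3^s}\to\mathbb F_3$ denote the absolute trace. Vectors in $\mathbb F_3^{3^{2m}}$ are indexed by $\mathbb F_{3^{2m}}$, and a function $f:\mathbb F_{3^{2m}}\to\mathbb F_3$ is identified with $(f(t))_{t\in\mathbb F_{3^{2m}}}$. Let $\mathcal C(2m,3)=\{(\mathrm{Tr}_{2m}(at^{3^m+1}+bt)+h)_{t\in\mathbb F_{3^{2m}}}: a\in\mathbb F_{3^m}, b\in\mathbb F_{3^{2m}}, h\in\mathbb F_3\}$, let $d$ be its minimum nonzero Hamming weight, let $\mathbb D_d$ be the incidence structure on $\mathbb F_{3^{2m}}$ whose blocks are the supports of the weight-$d$ codewords, and let $\mathcal C_3(\mathbb D_d)$ be the $\mathbb F_3$-span of the incidence vectors of the blocks (entry $1$ on the block, $0$ elsewhere). *)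

(* Defs.v *)
From mathcomp Require Import all_boot all_order all_algebra all_field.
Set Implicit Arguments. Unset Strict Implicit. Unset Printing Implicit Defensive.
Import GRing.Theory.
Local Open Scope ring_scope.

Section Defs.
Variables (F : finFieldType) (m : nat).

(* absolute trace F_{3^n} -> F_3, computed inside F: x + x^3 + ... + x^(3^(n-1)) *)
Definition abs_trace (n : nat) (x : F) : F := \sum_(i < n) x ^+ (3 ^ i).

(* identification of the prime subfield {0,1,2}%:R of F (char 3) with 'F_3 *)
Definition toF3 (x : F) : 'F_3 := odflt 0 [pick k : 'F_3 | ((k : nat)%:R : F) == x].

Definition in_sub (a : F) : bool := a ^+ (3 ^ m) == a.

Definition codeword (a b : F) (h : 'F_3) : {ffun F -> 'F_3} :=
  [ffun t => toF3 (abs_trace (2 * m) (a * t ^+ (3 ^ m + 1) + b * t)) + h].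

Definition code : {set {ffun F -> 'F_3}} :=
  [set c | [exists a : F, exists b : F, exists h : 'F_3,
             in_sub a && (c == codeword a b h)]].

Definition wt (c : {ffun F -> 'F_3}) : nat := #|[set t | c t != 0]|.

Definition min_wt : nat := \big[minn/#|F|]_(c in code | c != 0) wt c.

Definition supp (c : {ffun F -> 'F_3}) : {set F} := [set t | c t != 0].

Definition blocks : {set {set F}} :=
  [set supp c | c in [set c in code | (c != 0) && (wt c == min_wt)]].

Definition incvec (B : {set F}) : {ffun F -> 'F_3} := [ffun t => (t \in B)%:R].

(* membership in C_3(D_d) = F_3-span of incidence vectors of blocks
   (linear combination written coordinatewise) *)
Definition in_C3Dd (v : {ffun F -> 'F_3}) : Prop :=
  exists lam : {set F} -> 'F_3,
    forall t : F, v t = \sum_(B in blocks) lam B * incvec B t.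

End Defs.

(* Main.v *)
Require Import Defs.
From mathcomp Require Import all_boot all_order all_algebra all_field.
From mathcomp Require Import ring zify.
Set Implicit Arguments. Unset Strict Implicit. Unset Printing Implicit Defensive.
Import GRing.Theory.
Local Open Scope ring_scope.
Section S.
Variables (F : finFieldType) (m : nat).
Hypothesis hm : (2 <= m)%N.
Hypothesis hF : #|F| = (3 ^ (2 * m))%N.

Lemma char3 : 3%N \in [pchar F].
Proof. by apply: (card_finPcharP hF). Qed.

Lemma three0 : (3%:R : F) = 0.
Proof. exact: (pcharf0 char3). Qed.

Lemma nat3 (n : nat) : [pchar F].-nat (3 ^ n)%N.
Proof. by rewrite pnatX (pnatE _ (isT : prime 3)) char3. Qed.

Lemma frobD n (x y : F) : (x + y) ^+ (3 ^ n) = x ^+ (3 ^ n) + y ^+ (3 ^ n).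
Proof. exact: exprDn_pchar (nat3 n). Qed.

Lemma frobN n (x : F) : (- x) ^+ (3 ^ n) = - x ^+ (3 ^ n).
Proof. exact: exprNn_pchar (nat3 n). Qed.

Lemma frobB n (x y : F) : (x - y) ^+ (3 ^ n) = x ^+ (3 ^ n) - y ^+ (3 ^ n).
Proof. by rewrite frobD frobN. Qed.

Lemma frob0 n : (0 : F) ^+ (3 ^ n) = 0.
Proof. by rewrite expr0n expn_eq0. Qed.

Lemma frobS n k (f : 'I_k -> F) :
  (\sum_(i < k) f i) ^+ (3 ^ n) = \sum_(i < k) f i ^+ (3 ^ n).
Proof.
elim/big_ind2: _ => //; first exact: frob0.
by move=> a b c d <- <-; rewrite frobD.
Qed.

Lemma fixQ (x : F) : x ^+ (3 ^ (2 * m)) = x.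
Proof. by rewrite -hF expf_card. Qed.

Definition T (x : F) := abs_trace (2 * m) x.

Lemma T_add x y : T (x + y) = T x + T y.
Proof. by rewrite /T /abs_trace -big_split; apply: eq_bigr => i _; rewrite frobD. Qed.

Lemma T_opp x : T (- x) = - T x.
Proof. by rewrite /T /abs_trace -sumrN; apply: eq_bigr => i _; rewrite frobN. Qed.

Lemma T0 : T 0 = 0.
Proof. by rewrite /T /abs_trace big1 // => i _; rewrite frob0. Qed.

Lemma shiftsum (f : nat -> F) : f (2 * m)%N = f 0%N ->
  \sum_(i < 2 * m) f i.+1 = \sum_(i < 2 * m) f i.
Proof.
move=> h.
have e1 := @big_ord_recr F 0 +%R (2 * m) (fun i : 'I_(2 * m).+1 => f i).
have e2 := @big_ord_recl F 0 +%R (2 * m) (fun i : 'I_(2 * m).+1 => f i).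
have e := etrans (esym e1) e2; simpl in e; rewrite h in e.
by apply: (addrI (f 0%N)); rewrite -e addrC.
Qed.

Lemma T_cube x : T x ^+ 3 = T x.
Proof.
rewrite /T /abs_trace -(expn1 3) frobS expn1.
rewrite (eq_bigr (fun i : 'I_(2 * m) => (fun j => x ^+ (3 ^ j)) (i.+1))); last first.
  by move=> i _; rewrite -exprM expnS mulnC.
have := @shiftsum (fun j : nat => x ^+ (3 ^ j)); rewrite /= fixQ expr1; move=> H; exact: H.
Qed.

Lemma T_frob x : T (x ^+ 3) = T x.
Proof.
rewrite /T /abs_trace.
rewrite (eq_bigr (fun i : 'I_(2 * m) => (fun j => x ^+ (3 ^ j)) (i.+1))); last first.
  by move=> i _; rewrite -exprM expnS.
have := @shiftsum (fun j : nat => x ^+ (3 ^ j)); rewrite /= fixQ expr1; move=> H; exact: H.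
Qed.

Lemma T_frobn n x : T (x ^+ (3 ^ n)) = T x.
Proof.
elim: n => [|n IH]; first by rewrite expr1.
by rewrite expnSr exprM T_frob.
Qed.


Lemma natF0 n : ((n%:R : F) == 0) = (3 %| n)%N.
Proof. by rewrite (dvdn_pcharf char3). Qed.

Lemma cube_cases (z : F) : z ^+ 3 = z -> [\/ z = 0%:R, z = 1%:R | z = 2%:R].
Proof.
move=> h.
have e : z * (z - 1) * (z + 1) = 0.
  have -> : z * (z - 1) * (z + 1) = z ^+ 3 - z by ring.
  by rewrite h subrr.
have two : (2%:R : F) = -1.
  by apply/eqP; rewrite -subr_eq0 opprK -(natrD F 2 1) natF0.
move/eqP: e; rewrite !mulf_eq0 subr_eq0 addr_eq0 -two.
by case/orP => [/orP[]|] /eqP ->; [constructor 1|constructor 2|constructor 3].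
Qed.


Lemma F3_add0 (k h : 'F_3) : (k + h == 0) = (3 %| (k + h)%N)%N.
Proof. by case: k => [[|[|[|k]]] Hk] //; case: h => [[|[|[|h]]] Hh]. Qed.

Lemma natF_inj3 (i j : nat) : (i < 3)%N -> (j < 3)%N -> (i%:R : F) = j%:R -> i = j.
Proof.
wlog le : i j / (i <= j)%N.
  by move=> W hi hj e; case/orP: (leq_total i j) => H; [|apply/esym]; apply: W.
move=> hi hj /eqP; rewrite eq_sym -subr_eq0 -natrB // natF0 => d.
have : (j - i < 3)%N by apply: leq_ltn_trans (leq_subr _ _) hj.
move: d; case: (j - i)%N (subnKC le) => [|[|[|[|k]]]] //= e _ _.
by rewrite addn0 in e.
Qed.

Lemma toF3_emb (k : 'F_3) : toF3 ((k : nat)%:R : F) = k.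
Proof.
rewrite /toF3; case: pickP => [j /eqP hj | /(_ k)]; last by rewrite eqxx.
apply: val_inj; apply: natF_inj3 hj; [exact: (ltn_ord j) | exact: (ltn_ord k)].
Qed.


Lemma toF3_ne (z : F) (h : 'F_3) : z ^+ 3 = z ->
  (toF3 z + h != 0) = (z != - ((h : nat)%:R)).
Proof.
move=> /cube_cases hz.
have [k ->] : exists k : 'F_3, z = (k : nat)%:R.
  by case: hz => ->; [exists 0 | exists 1 | exists (2%:R)].
by rewrite toF3_emb F3_add0 -natF0 natrD addr_eq0.
Qed.


Lemma card_roots_lt (p : {poly F}) (A : {set F}) :
  p != 0 -> (forall x, x \in A -> root p x) -> (#|A| < size p)%N.
Proof.
move=> p0 hA; rewrite cardE; apply: max_poly_roots => //; last exact: enum_uniq.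
by apply/allP => x; rewrite mem_enum; apply: hA.
Qed.

Definition tp n : {poly F} := \sum_(i < n) 'X^(3 ^ i).

Lemma size_tp n : size (tp n.+1) = (3 ^ n).+1.
Proof.
elim: n => [|n IH]; first by rewrite /tp big_ord1 expn0 size_polyXn.
rewrite /tp big_ord_recr /= -/(tp n.+1) addrC size_addl size_polyXn //.
by rewrite IH ltnS ltn_exp2l.
Qed.

Lemma tpE n x : (tp n).[x] = \sum_(i < n) x ^+ (3 ^ i).
Proof. by rewrite /tp horner_sum; apply: eq_bigr => i _; rewrite hornerXn. Qed.

Lemma fiber_bound (n : nat) (c w : F) (A : {set F}) : c != 0 ->
  (#|[set x in A | (c * \sum_(i < n.+1) x ^+ (3 ^ i) == w)%R]| <= 3 ^ n)%N.
Proof.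
move=> c0.
have sz : size (c *: tp n.+1 - w%:P) = (3 ^ n).+1.
  rewrite size_addl size_scale // size_tp // size_opp ltnS.
  by apply: leq_trans (size_polyC_leq1 _) _; rewrite expn_gt0.
rewrite -ltnS -sz; apply: card_roots_lt; first by rewrite -size_poly_eq0 sz.
move=> x; rewrite inE => /andP[_ /eqP e].
by rewrite /root !hornerE tpE e subrr.
Qed.


Lemma sum_eq_bound (I : finType) (A : {set I}) (f : I -> nat) (B : nat) :
  (forall i, i \in A -> f i <= B)%N -> (#|A| * B <= \sum_(i in A) f i)%N ->
  forall i, i \in A -> f i = B.
Proof.
move=> hle hge i iA; apply/eqP; rewrite eqn_leq hle //=.
have h1 : (\sum_(j in A | j != i) f j <= \sum_(j in A | j != i) B)%N.
  by apply: leq_sum => j /andP[jA _]; apply: hle.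
have h2 : \sum_(j in A) B = (B + \sum_(j in A | j != i) B)%N by rewrite [LHS](bigD1 i).
move: hge; rewrite -sum_nat_const h2 [X in (_ <= X)%N](bigD1 i) //= => h3.
rewrite -(leq_add2r (\sum_(j in A | j != i) B)).
by apply: leq_trans h3 _; rewrite leq_add2l.
Qed.

Definition q := (3 ^ m)%N.
Definition Fq : {set F} := [set x | x ^+ q == x].

Lemma qq : (q * q = 3 ^ (2 * m))%N.
Proof. by rewrite /q -expnD addnn -mul2n. Qed.

Lemma q_gt1 : (1 < q)%N.
Proof. by rewrite /q -{1}(expn0 3) ltn_exp2l //; apply: leq_trans hm. Qed.

Lemma fixqq (x : F) : x ^+ (q * q) = x.
Proof. by rewrite qq fixQ. Qed.

Lemma inFq x : (x \in Fq) = (x ^+ q == x).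
Proof. by rewrite inE. Qed.

Lemma Fq0 : (0 : F) \in Fq.
Proof. by rewrite inFq frob0. Qed.

Lemma Fq_mul x y : x \in Fq -> y \in Fq -> x * y \in Fq.
Proof. by rewrite !inFq exprMn => /eqP-> /eqP->. Qed.

Lemma Fq_inv x : x \in Fq -> x^-1 \in Fq.
Proof. by rewrite !inFq exprVn => /eqP->. Qed.

Lemma N_Fq t : t ^+ (q + 1) \in Fq.
Proof. by rewrite inFq -exprM mulnDl mul1n exprD fixqq addn1 exprS. Qed.

Lemma card_Fq_le : (#|Fq| <= q)%N.
Proof.
have sz : size ('X^q - 'X : {poly F}) = q.+1.
  by rewrite size_addl size_polyXn // size_opp size_polyX ltnS q_gt1.
rewrite -ltnS -sz; apply: card_roots_lt; first by rewrite -size_poly_eq0 sz.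
by move=> x; rewrite inFq /root !hornerE => /eqP->; rewrite subrr.
Qed.

Lemma norm_fiber_le (y : F) : y != 0 -> (#|[set t | t ^+ (q + 1) == y]| <= q + 1)%N.
Proof.
move=> y0.
have sz : size ('X^(q + 1) - y%:P : {poly F}) = (q + 1).+1 by rewrite size_XnsubC // addn1.
rewrite -ltnS -sz; apply: card_roots_lt; first by rewrite -size_poly_eq0 sz.
by move=> x; rewrite inE /root !hornerE => /eqP->; rewrite subrr.
Qed.


Lemma card_fibers (A Q : {set F}) (p : F -> F) :
  (forall t, t \in A -> p t \in Q) ->
  #|A| = (\sum_(y in Q) #|[set t in A | p t == y]|)%N.
Proof.
move=> hp; rewrite -sum1_card (partition_big p (mem Q)) //=.
by apply: eq_bigr => y _; rewrite sum1dep_card.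
Qed.

Definition Nm (t : F) := t ^+ (q + 1).
Definition U : {set F} := Fq :\ 0.

Lemma Nm_fiber_set (y : F) : y != 0 ->
  [set t in [set~ 0] | Nm t == y] = [set t | Nm t == y].
Proof.
move=> y0; apply/setP => t; rewrite !inE andb_idl // => /eqP ht.
by apply: contra y0 => /eqP t0; rewrite -ht t0 /Nm expr0n addn1.
Qed.

Lemma norm_sum :
  (q * q - 1 = \sum_(y in U) #|[set t | Nm t == y]|)%N.
Proof.
have -> : (q * q - 1 = #|[set~ (0 : F)%R]|)%N by rewrite cardsC1 hF -qq subn1.
rewrite (@card_fibers _ U Nm); last first.
  move=> t; rewrite /U !inE -inFq N_Fq andbT => t0; exact: expf_neq0.
apply: eq_bigr => y; rewrite !inE => /andP[y0 _]; by rewrite Nm_fiber_set.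
Qed.

Lemma card_Fq_and_fiber :
  #|U| = (q - 1)%N /\ forall y, y \in U -> #|[set t | Nm t == y]| = (q + 1)%N.
Proof.
have hle : forall y, y \in U -> (#|[set t | Nm t == y]| <= q + 1)%N.
  by move=> y; rewrite !inE => /andP[y0 _]; apply: norm_fiber_le.
have S1 : (q * q - 1 <= #|U| * (q + 1))%N.
  rewrite norm_sum -sum_nat_const; exact: leq_sum.
have U1 : (#|U| <= q - 1)%N.
  have := cardsD1 (0 : F) Fq; rewrite Fq0 => e.
  have := card_Fq_le; rewrite e /U add1n => h; by rewrite leq_subRL ?add1n // ltnW // q_gt1.
have qe : (q * q - 1 = (q - 1) * (q + 1))%N.
  have := q_gt1; nia.
have U2 : #|U| = (q - 1)%N.
  apply/eqP; rewrite eqn_leq U1 /=.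
  by rewrite -(@leq_pmul2r (q + 1)) ?addn1 // -[q.+1]addn1 -qe.
split => //; apply: sum_eq_bound => //.
by rewrite -norm_sum U2 qe.
Qed.


Lemma two_neg : (2%:R : F) = -1.
Proof. by apply/eqP; rewrite -subr_eq0 opprK -(natrD F 2 1) natF0. Qed.

Lemma two_neq0 : (2%:R : F) != 0.
Proof. by rewrite natF0. Qed.

Lemma two_neq1 : (2%:R : F) != 1.
Proof. by apply/eqP => /(natF_inj3 (isT : (2 < 3)%N) (isT : (1 < 3)%N)). Qed.

Lemma Tq y : y \in Fq -> T y = 2%:R * \sum_(i < m) y ^+ (3 ^ i).
Proof.
rewrite inFq => /eqP hy.
rewrite /T /abs_trace mul2n -addnn big_split_ord /= mulr_natl mulr2n.
congr (_ + _); apply: eq_bigr => i _ //=.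
by rewrite expnD exprM hy.
Qed.

Lemma card3 (A : {set F}) (g : F -> F) : (forall x, g x ^+ 3 = g x) ->
  #|A| = (#|[set x in A | (g x == 0)%R]| + #|[set x in A | (g x == 1)%R]|
          + #|[set x in A | (g x == 2%:R)%R]|)%N.
Proof.
move=> hg; rewrite (@card_fibers _ (0 |: (1 |: [set 2%:R])) g); last first.
  move=> x _; have := cube_cases (hg x).
  by case=> ->; rewrite !inE eqxx ?orbT.
rewrite !big_setU1 /= ?big_set1 ?addnA //.
  by rewrite inE eq_sym two_neq1.
by rewrite !inE negb_or eq_sym oner_neq0 eq_sym two_neq0.
Qed.

Lemma Fq_fiber_le w : (#|[set y in Fq | T y == w]| <= 3 ^ m.-1)%N.
Proof.
have -> : [set y in Fq | T y == w] =
   [set y in Fq | 2%:R * \sum_(i < m.-1.+1) y ^+ (3 ^ i) == w].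
  apply/setP => y; rewrite !inE; case yq: (y ^+ q == y) => //=.
  by rewrite Tq ?inFq // prednK // ltnW.
have := @fiber_bound m.-1 2%:R w Fq two_neq0. exact.
Qed.

Lemma card_Fq : #|Fq| = q.
Proof.
have [h _] := card_Fq_and_fiber.
have := cardsD1 (0 : F) Fq; rewrite Fq0 -/U h add1n => ->.
by rewrite subn1 prednK // ltnW // q_gt1.
Qed.

Lemma arith3 (a b c B : nat) : (a <= B)%N -> (b <= B)%N -> (c <= B)%N ->
  (3 * B = a + b + c)%N -> [/\ a = B, b = B & c = B].
Proof. move=> *; split; lia. Qed.

Lemma Fq_fiber w : w ^+ 3 = w -> #|[set y in Fq | T y == w]| = (3 ^ m.-1)%N.
Proof.
have e := card3 Fq T_cube; rewrite card_Fq in e.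
have h0 := Fq_fiber_le 0; have h1 := Fq_fiber_le 1; have h2 := Fq_fiber_le 2%:R.
have qE : q = (3 * 3 ^ m.-1)%N by rewrite /q -expnS prednK // ltnW.
rewrite qE in e.
have [e0 e1 e2] := arith3 h0 h1 h2 e.
by case/cube_cases => ->; rewrite ?mulr0n ?mulr1n.
Qed.


Lemma inU a : (a \in U) = (a != 0) && (a \in Fq).
Proof. by rewrite /U !inE. Qed.

Lemma scale_Fq a (P : pred F) : a \in U ->
  #|[set y in Fq | P (a * y)]| = #|[set y in Fq | P y]|.
Proof.
rewrite inU => /andP[a0 aq].
rewrite -(card_imset _ (mulfI a0)).
suff -> : [set a * y | y in [set y in Fq | P (a * y)]] = [set y in Fq | P y] by [].
apply/setP => z; apply/imsetP/idP.
  by case=> y; rewrite !inE -?inFq => /andP[yq Py] ->; rewrite Fq_mul.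
rewrite inE -?inFq => /andP[zq Pz]; exists (a^-1 * z); last by rewrite mulVKf.
by rewrite inE -?inFq Fq_mul ?Fq_inv //= mulVKf.
Qed.

Lemma Fq_fiber_scaled a w : a \in U -> w ^+ 3 = w ->
  #|[set y in Fq | T (a * y) == w]| = (3 ^ m.-1)%N.
Proof. by move=> aU hw; rewrite (scale_Fq (fun z => T z == w) aU) Fq_fiber. Qed.

Lemma Nm_fiber0 : [set t | Nm t == 0] = [set 0].
Proof.
apply/setP => t; rewrite !inE -?inFq /Nm expf_eq0 addn1 //.
Qed.

Lemma H5_sum a w :
  #|[set u | T (a * Nm u) == w]| =
  \sum_(y in [set y in Fq | T (a * y) == w]) #|[set t | Nm t == y]|.
Proof.
rewrite (@card_fibers _ [set y in Fq | T (a * y) == w] Nm); last first.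
  by move=> t; rewrite !inE -?inFq N_Fq.
apply: eq_bigr => y; rewrite inE -?inFq => /andP[_ /eqP hy].
apply: eq_card => t; rewrite !inE -?inFq andb_idl // => /eqP ->.
by rewrite hy.
Qed.

Lemma Nm_card y : y \in Fq -> (#|[set t | Nm t == y]| <= q + 1)%N.
Proof.
move=> yq; have [y0 | y0] := eqVneq y 0.
  by rewrite y0 Nm_fiber0 cards1 addn1.
by have [_ ->] := card_Fq_and_fiber; rewrite // inU y0.
Qed.

Lemma H5_le a w : a \in U -> w ^+ 3 = w ->
  (#|[set u | (T (a * Nm u) == w)%R]| <= 3 ^ m.-1 * (q + 1))%N.
Proof.
move=> aU hw; rewrite H5_sum -(Fq_fiber_scaled aU hw) -sum_nat_const.
by apply: leq_sum => y; rewrite inE -?inFq => /andP[yq _]; apply: Nm_card.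
Qed.

Lemma H5_eq a w : a \in U -> w ^+ 3 = w -> w != 0 ->
  #|[set u | T (a * Nm u) == w]| = (3 ^ m.-1 * (q + 1))%N.
Proof.
move=> aU hw w0; rewrite H5_sum -(Fq_fiber_scaled aU hw) -sum_nat_const.
apply: eq_bigr => y; rewrite inE -?inFq => /andP[yq /eqP hy].
have [_ ->] := card_Fq_and_fiber => //; rewrite inU yq andbT.
by apply: contra w0 => /eqP y0; rewrite -hy y0 mulr0 T0.
Qed.


Lemma frobN3 (x : F) : (- x) ^+ 3 = - x ^+ 3.
Proof. exact: (frobN 1 x). Qed.
Lemma frobD3 (x y : F) : (x + y) ^+ 3 = x ^+ 3 + y ^+ 3.
Proof. exact: (frobD 1 x y). Qed.

Lemma frobB3 (x y : F) : (x - y) ^+ 3 = x ^+ 3 - y ^+ 3.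
Proof. exact: (frobB 1 x y). Qed.

Lemma natcube n : ((n%:R : F) ^+ 3) = n%:R.
Proof.
elim: n => [|n IH]; first by rewrite expr0n.
by rewrite -addn1 natrD frobD3 IH expr1n.
Qed.

Definition eta (h : 'F_3) : F := - ((h : nat)%:R).

Lemma eta_cube h : eta h ^+ 3 = eta h.
Proof. by rewrite /eta frobN3 natcube. Qed.

Lemma cw_ne a b h t :
  (codeword m a b h t != 0) = (T (a * Nm t + b * t) != eta h).
Proof. by rewrite ffunE toF3_ne // T_cube. Qed.

Lemma wt_cw a b h :
  wt (codeword m a b h) = #|[set t | T (a * Nm t + b * t) != eta h]|.
Proof. by rewrite /wt; apply: eq_card => t; rewrite !inE cw_ne. Qed.

Lemma T_mul3 x : T (x + 2%:R * x) = 0.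
Proof.
have -> : x + 2%:R * x = 3%:R * x by rewrite !mulr_natl -mulrS.
by rewrite three0 mul0r T0.
Qed.

Lemma shift_alg (a b c u Uq C : F) : b = a * C ->
  a * ((Uq + C) * (u + c)) + b * (u + c) =
  a * (Uq * u) + (a * c * Uq + 2%:R * (b * u)) + (a * (C * c) + b * c).
Proof. move=> ->; ring. Qed.

Lemma shift_id a b : a \in U -> exists c, forall u,
  T (a * Nm (u + c) + b * (u + c)) = T (a * Nm u) + T (a * Nm c + b * c).
Proof.
rewrite inU => /andP[a0 aq].
exists ((b / a) ^+ q) => u.
set c := (b / a) ^+ q.
have hC : a * c ^+ q = b by rewrite -exprM fixqq mulrC divfK.
have haq : a ^+ q = a by move: aq; rewrite inFq => /eqP.
have hN : Nm (u + c) = (u ^+ q + c ^+ q) * (u + c).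
  by rewrite /Nm addn1 exprSr /q frobD.
set Uq := u ^+ q; set C := c ^+ q.
have e : a * Nm (u + c) + b * (u + c) =
   a * Nm u + (a * c * Uq + 2%:R * (b * u)) + (a * Nm c + b * c).
  rewrite hN /Nm addn1 !exprSr -/Uq -/C; apply: shift_alg; by rewrite hC.
have hf : T (a * c * Uq) = T (b * u).
  rewrite -(T_frobn m) -/q !exprMn haq /Uq -exprM fixqq.
  by rewrite -exprM fixqq [a * _]mulrC divfK.
by rewrite e !T_add hf -T_add T_mul3 addr0.
Qed.


Lemma preim_card (f : F -> F) (P : pred F) : injective f ->
  #|[set t | P (f t)]| = #|[set t | P t]|.
Proof.
move=> inj; rewrite -(card_preimset [set t | P t] inj).
by apply: eq_card => t; rewrite !inE.
Qed.

Lemma T_fiber_le w : (#|[set x | (T x == w)%R]| <= 3 ^ (2 * m).-1)%N.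
Proof.
have -> : [set x | T x == w] =
   [set x in [set: F] | 1 * \sum_(i < (2 * m).-1.+1) x ^+ (3 ^ i) == w].
  apply/setP => x; rewrite !inE mul1r prednK //.
  by rewrite muln_gt0 /= ltnW.
exact: (@fiber_bound (2 * m).-1 1 w [set: F] (oner_neq0 F)).
Qed.

Definition Z a b h := [set t | T (a * Nm t + b * t) == eta h].

Lemma zero_count a b h : a \in Fq -> codeword m a b h != 0 ->
  (#|Z a b h| <= 3 ^ m.-1 * (q + 1))%N.
Proof.
move=> aq cw0; rewrite /Z.
have [a0 | a0] := eqVneq a 0.
  have [b0 | b0] := eqVneq b 0.
    have [e0 | e0] := eqVneq (eta h) 0.
      case/eqP: cw0; apply/ffunP => t.
      have -> : (0 : {ffun F -> 'F_3}) t = 0 by rewrite ffunE.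
      apply/eqP.
      by rewrite -[_ == _]negbK cw_ne a0 b0 !mul0r addr0 T0 e0 eqxx.
    rewrite (_ : [set t | _] = set0) ?cards0 //.
    by apply/setP => t; rewrite !inE a0 b0 !mul0r addr0 T0 eq_sym (negbTE e0).
  have -> : [set t | T (a * Nm t + b * t) == eta h] = [set t | T (b * t) == eta h].
    by apply/setP => t; rewrite !inE a0 mul0r add0r.
  rewrite (preim_card (fun x => T x == eta h) (mulfI b0)).
  apply: leq_trans (T_fiber_le _) _.
  have -> : (2 * m).-1 = (m.-1 + m)%N by move: hm; lia.
  by rewrite expnD /q leq_mul2l leq_addr orbT.
have aU : a \in U by rewrite inU a0.
have [c hc] := shift_id b aU.
rewrite -(preim_card (fun t => T (a * Nm t + b * t) == eta h) (addIr c)).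
have -> : [set t | T (a * Nm (t + c) + b * (t + c)) == eta h] =
          [set t | T (a * Nm t) == eta h - T (a * Nm c + b * c)].
  apply/setP => t; rewrite !inE hc; apply/eqP/eqP => [<-|->]; [by rewrite addrK | by rewrite subrK].
apply: H5_le => //.
by rewrite frobB3 eta_cube T_cube.
Qed.


Definition d := (q * q - 3 ^ m.-1 * (q + 1))%N.

Lemma wt_Z a b h : wt (codeword m a b h) = (q * q - #|Z a b h|)%N.
Proof.
rewrite wt_cw qq -hF -(cardsC (Z a b h)) addKn.
by apply: eq_card => t; rewrite !inE.
Qed.

Lemma cw_code a b h : a \in Fq -> codeword m a b h \in code F m.
Proof.
move=> aq; rewrite inE; apply/existsP; exists a; apply/existsP; exists b.
apply/existsP; exists h; rewrite eqxx andbT.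
by move: aq; rewrite inFq.
Qed.

Lemma wt_ge c : c \in code F m -> c != 0 -> (d <= wt c)%N.
Proof.
rewrite inE => /existsP[a /existsP[b /existsP[h /andP[aq /eqP ->]]]] cw0.
rewrite wt_Z; apply: leq_sub2l; apply: zero_count => //.
by rewrite inFq.
Qed.

Lemma eta2 : eta 2%:R = 1.
Proof. by rewrite /eta /= two_neg opprK. Qed.

Lemma wt_Ba a : a \in U -> wt (codeword m a 0 2%:R) = d.
Proof.
move=> aU; rewrite wt_Z /d; congr (_ - _)%N.
rewrite /Z eta2.
rewrite (eq_card (B := [set t | T (a * Nm t) == 1])); last first.
  by move=> t; rewrite !inE mul0r addr0.
apply: H5_eq => //; [exact: expr1n | exact: oner_neq0].
Qed.

Lemma d_pos : (0 < d)%N.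
Proof.
rewrite /d subn_gt0.
have qE : q = (3 * 3 ^ m.-1)%N by rewrite /q -expnS prednK // ltnW.
rewrite qE; have : (0 < 3 ^ m.-1)%N by rewrite expn_gt0.
move: (3 ^ m.-1)%N => k k0; nia.
Qed.

Lemma wt0 : wt (0 : {ffun F -> 'F_3}) = 0%N.
Proof. by apply: eq_card0 => t; rewrite inE ffunE eqxx. Qed.

Lemma one_U : (1 : F) \in U.
Proof. by rewrite inU oner_neq0 inFq expr1n eqxx. Qed.

Lemma cwB_nz a : a \in U -> codeword m a 0 2%:R != 0.
Proof.
move=> aU; apply/eqP => e; have := wt_Ba aU; rewrite e wt0 => d0.
by have := d_pos; rewrite -d0.
Qed.

Lemma bigmin_le_seq (I : eqType) (r : seq I) (G : I -> nat) z x :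
  x \in r -> (\big[minn/z]_(i <- r) G i <= G x)%N.
Proof.
elim: r => // y r IH; rewrite inE big_cons => /orP[/eqP->|/IH h].
  exact: geq_minl.
exact: leq_trans (geq_minr _ _) h.
Qed.

Lemma min_wt_eq : min_wt F m = d.
Proof.
have c1U := one_U.
have c1c : codeword m 1 0 2%:R \in code F m.
  by apply: cw_code; move: c1U; rewrite inU => /andP[].
apply/eqP; rewrite eqn_leq; apply/andP; split.
  rewrite /min_wt -big_filter.
  have := @bigmin_le_seq _ [seq x <- index_enum {ffun F -> 'F_3} | (x \in code F m) && (x != 0)] (@wt F) #|F| (codeword m 1 0 2%:R).
  rewrite mem_filter c1c cwB_nz // mem_index_enum wt_Ba // => H; exact: H.
rewrite /min_wt; elim/big_ind: _ => //.
- by rewrite hF -qq /d leq_subr.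
- by move=> x y hx hy; rewrite leq_min hx hy.
- by move=> c /andP[hc c0]; apply: wt_ge.
Qed.

Lemma Ba_block a : a \in U -> supp (codeword m a 0 2%:R) \in blocks F m.
Proof.
move=> aU; apply: imset_f.
have hc : codeword m a 0 2%:R \in code F m.
  by apply: cw_code; move: aU; rewrite inU => /andP[].
by rewrite inE hc cwB_nz //= wt_Ba // min_wt_eq eqxx.
Qed.


Lemma regroup (A : {set F}) (Bs : {set {set F}}) (f : F -> {set F})
  (g : {set F} -> 'F_3) : (forall a, a \in A -> f a \in Bs) ->
  \sum_(B in Bs) (#|[set a in A | f a == B]|)%:R * g B = \sum_(a in A) g (f a).
Proof.
move=> hf; rewrite [RHS](partition_big f (mem Bs)) //=.
apply: eq_bigr => B _.
rewrite (eq_bigr (fun _ => g B)); last by move=> a /andP[_ /eqP->].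
rewrite (eq_bigl (mem [set a in A | f a == B])); last by move=> a; rewrite !inE.
by rewrite sumr_const mulr_natl.
Qed.

Lemma count_mod t :
  (#|[set a in U | (T (a * Nm t) != 1)%R]| %% 3 = 2)%N.
Proof.
have [h1 _] := card_Fq_and_fiber.
have hs : (#|[set a in U | (T (a * Nm t) != 1)%R]| + #|[set a in U | (T (a * Nm t) == 1)%R]| = q - 1)%N.
  rewrite -h1 -(cardsID [set a | (T (a * Nm t) == 1)%R] U) addnC.
  congr (_ + _)%N; apply: eq_card => a; rewrite !inE //.
  by case: (a != 0); case: (a ^+ q == a); case: (T (a * Nm t) != 1).
have hk : exists j, (3 ^ m.-1 = 3 * j)%N.
  by exists (3 ^ m.-2)%N; rewrite -expnS; congr (3 ^ _)%N; move: hm; lia.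
have [j hj] := hk.
have qE : q = (3 * 3 ^ m.-1)%N by rewrite /q -expnS prednK // ltnW.
have j0 : (0 < j)%N.
  by move: (expn_gt0 3 m.-1); rewrite hj muln_gt0 => /andP[].
have [y0 | y0] := eqVneq (Nm t) 0.
  have e : [set a in U | (T (a * Nm t) == 1)%R] = set0.
    apply/setP => z; rewrite !inE y0 mulr0 T0 (eq_sym 0) oner_eq0.
    by rewrite andbF.
  move: hs; rewrite e cards0 addn0 => ->.
  rewrite qE hj; move: j0; clear; lia.
have yU : Nm t \in U by rewrite inU y0 /Nm N_Fq.
have e : #|[set a in U | (T (a * Nm t) == 1)%R]| = (3 ^ m.-1)%N.
  rewrite -(Fq_fiber_scaled yU (expr1n _ 3)).
  apply: eq_card => a; rewrite !inE -!inFq mulrC.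
  case: (a =P 0) => [->|_] //=; by rewrite mulr0 T0 (eq_sym 0) oner_eq0 !andbF.
move: hs; rewrite e qE hj => hs.
move: hs j0; clear; lia.
Qed.


Lemma final : in_C3Dd m [ffun _ : F => (1 : 'F_3)].
Proof.
exists (fun B => - (#|[set a in U | supp (codeword m a 0 2%:R) == B]|)%:R).
move=> t; rewrite ffunE.
under eq_bigr do rewrite mulNr.
rewrite sumrN (regroup (fun B => incvec B t) Ba_block).
rewrite (eq_bigr (fun a => ((T (a * Nm t) != 1) : nat)%:R)); last first.
  move=> a _; rewrite /incvec ffunE inE cw_ne eta2.
  by rewrite mul0r addr0.
rewrite (bigID (fun i => T (i * Nm t) != 1)) /=.
rewrite [X in _ + X]big1; last by move=> i /andP[_ /negbTE ->].
rewrite addr0 (eq_bigr (fun _ => 1)); last by move=> i /andP[_ ->].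
rewrite (eq_bigl (mem [set a in U | T (a * Nm t) != 1])); last by move=> a; rewrite !inE.
rewrite sumr_const -(Fp_nat_mod (isT : prime 3)) count_mod.
by apply/val_inj.
Qed.
End S.

Theorem lemma3p4 (F : finFieldType) (m : nat) (hm : (2 <= m)%N)
  (hF : #|F| = (3 ^ (2 * m))%N) :
  in_C3Dd m [ffun _ : F => (1 : 'F_3)].
Proof. exact: final hm hF. Qed.
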